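(* The real flag manifolds $\mathbb F_\Theta$ of type $D_4$ with $\Theta$ equal to one of $\{\lambda_1-\lambda_2,\lambda_2-\lambda_3,\lambda_3-\lambda_4\}$, $\{\lambda_1-\lambda_2,\lambda_2-\lambda_3,\lambda_3+\lambda_4\}$, $\{\lambda_2-\lambda_3,\lambda_3-\lambda_4,\lambda_3+\lambda_4\}$ do not admit $K$-invariant almost complex structures.
   Context: $\mathfrak g=\mathfrak{so}(4,4)$ (split real form of type $D_4$) with Iwasawa decomposition $\mathfrak g=\mathfrak k\oplus\mathfrak a\oplus\mathfrak n$, roots $\pm\lambda_i\pm\lambda_j$ ($1\le i<j\le4$), simple roots $\lambda_1-\lambda_2,\lambda_2-\lambda_3,\lambda_3-\lambda_4,\lambda_3+\lambda_4$. For $\Theta\subset\Sigma$, $\mathfrak p_\Theta=\mathfrak a\oplus\sum_{\alpha>0}\mathfrak g_\alpha\oplus\sum_{\alpha\in\langle\Theta\rangle^-}\mathfrak g_\alpha$ ($\langle\Theta\rangle^-$ the negative roots generated by $\Theta$); $G$ is the inner automorphism group of $\mathfrak g$, $K$ its maximal compact subgroup, $P_\Theta$ the normalizer of $\mathfrak p_\Theta$, $K_\Theta=K\cap P_\Theta$, $\mathbb F_\Theta=G/P_\Theta=K/K_\Theta$. $K$-invariant means invariant under the left $K$-action. *)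

(* Defs.v *)
From HB Require Import structures.
From mathcomp Require Import all_boot all_order all_algebra.
From mathcomp Require Import reals.
Set Implicit Arguments. Unset Strict Implicit. Unset Printing Implicit Defensive.
Import Order.TTheory GRing.Theory Num.Theory.
Local Open Scope ring_scope.

(** * Concrete model of g = so(4,4) (split real form of D_4).

  Writing X = [[A, B], [C, D]] (4x4 blocks), X in g iff D = -A^T, B, C skew.
  Cartan involution theta X = - X^T, so k = { X in g | X^T = - X }.
  a = { diag(h, -h) : h in R^4 } (a maximal split abelian subspace), and
  lambda_i (diag(h,-h)) = h_i.  Root spaces (one-dimensional):
    lambda_i - lambda_j (i <> j) : R (E_{i,j} - E_{4+j,4+i})
    lambda_i + lambda_j (i < j)  : R (E_{i,4+j} - E_{j,4+i})
   -(lambda_i + lambda_j) (i < j): R (E_{4+i,j} - E_{4+j,i})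
  and g = a (+) sum of root spaces (g_0 = a since g is split).
  Positive roots (w.r.t. the simple roots of the statement): lambda_i - lambda_j
  (i<j) and lambda_i + lambda_j.  For X in g the g_alpha-component of X, for a
  negative root alpha, is the coefficient X i j (alpha = lambda_i - lambda_j,
  i > j) resp. X (4+i) j (alpha = -(lambda_i+lambda_j), i < j). *)

Definition N8 := (4 + 4)%N.
Definition lsh (i : 'I_4) : 'I_(4 + 4) := lshift 4 i.
Definition rsh (i : 'I_4) : 'I_(4 + 4) := rshift 4 i.

Section Model.
Variable R : realType.

Definition Qform : 'M[R]_(4 + 4) := block_mx 0 1%:M 1%:M 0.

Definition in_g (X : 'M[R]_(4 + 4)) : Prop := X^T *m Qform + Qform *m X = 0.

Definition in_k (X : 'M[R]_(4 + 4)) : Prop := in_g X /\ X^T = - X.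

End Model.

(** Roots as integer vectors in the basis lambda_1..lambda_4 (indices 0..3). *)
Definition lam (i : 'I_4) : 'rV[int]_4 := \row_(k < 4) (k == i)%:R.

Definition in_span (Theta : seq 'rV[int]_4) (alpha : 'rV[int]_4) : Prop :=
  exists cs : seq int, size cs = size Theta /\
    alpha = \sum_(t <- zip cs Theta) t.1 *: t.2.

Section Parabolic.
Variable R : realType.
Variable Theta : seq 'rV[int]_4.

(** p_Theta = a (+) sum_{alpha>0} g_alpha (+) sum_{alpha in <Theta>^-} g_alpha:
    an element of g lies in p_Theta iff its components along the negative
    root spaces g_alpha with alpha not in <Theta>^- vanish. *)
Definition in_p (X : 'M[R]_(4 + 4)) : Prop :=
  in_g X /\
  (forall i j : 'I_4, (j < i)%N -> ~ in_span Theta (lam i - lam j) ->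
      X (lsh i) (lsh j) = 0) /\
  (forall i j : 'I_4, (i < j)%N -> ~ in_span Theta (- (lam i + lam j)) ->
      X (rsh i) (lsh j) = 0).

(** The maximal compact subgroup K of G = Int(g) is Ad(K0), where
    K0 = SO(4) x SO(4) = identity component of the orthogonal matrices
    preserving Qform.  Such k commute with Qform, so k = [[A,B],[B,A]], acting
    on the +1 / -1 eigenspaces of Qform by A+B and A-B. *)
Definition in_K0 (k : 'M[R]_(4 + 4)) : Prop :=
  k^T *m k = 1%:M /\ k *m Qform R = Qform R *m k /\
  \det (ulsubmx k + ursubmx k) = 1 /\ \det (ulsubmx k - ursubmx k) = 1.

Definition Ad (k X : 'M[R]_(4 + 4)) : 'M[R]_(4 + 4) := k *m X *m k^T.

(** K_Theta = K cap P_Theta, P_Theta the normalizer of p_Theta in G: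
    Ad(k) p_Theta = p_Theta. *)
Definition in_KTheta (k : 'M[R]_(4 + 4)) : Prop :=
  in_K0 k /\ forall X, in_p X <-> in_p (Ad k X).

Definition in_kTheta (X : 'M[R]_(4 + 4)) : Prop := in_k X /\ in_p X.

(** Tangent space T_o F_Theta = k / k_Theta, realised K_Theta-equivariantly
    as the orthogonal complement m_Theta of k_Theta in k w.r.t. the
    Ad(K)-invariant inner product -tr(XY). *)
Definition in_m (X : 'M[R]_(4 + 4)) : Prop :=
  in_k X /\ forall Y, in_kTheta Y -> \tr (X *m Y) = 0.

(** K-invariant almost complex structures on F_Theta = K/K_Theta correspond to
    linear complex structures J on T_o F_Theta commuting with Ad(K_Theta). *)
Definition invariant_acs (J : 'M[R]_(4 + 4) -> 'M[R]_(4 + 4)) : Prop :=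
  (forall X, in_m X -> in_m (J X)) /\
  (forall (a : R) X Y, in_m X -> in_m Y -> J (a *: X + Y) = a *: J X + J Y) /\
  (forall X, in_m X -> J (J X) = - X) /\
  (forall k X, in_KTheta k -> in_m X -> J (Ad k X) = Ad k (J X)).

Definition admits_K_invariant_acs : Prop :=
  exists J : 'M[R]_(4 + 4) -> 'M[R]_(4 + 4), invariant_acs J.

End Parabolic.

Arguments admits_K_invariant_acs : clear implicits.

Definition i0 : 'I_4 := @Ordinal 4 0 isT.
Definition i1 : 'I_4 := @Ordinal 4 1 isT.
Definition i2 : 'I_4 := @Ordinal 4 2 isT.
Definition i3 : 'I_4 := @Ordinal 4 3 isT.

Definition a1 : 'rV[int]_4 := lam i0 - lam i1.
Definition a2 : 'rV[int]_4 := lam i1 - lam i2.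
Definition a3 : 'rV[int]_4 := lam i2 - lam i3.
Definition a4 : 'rV[int]_4 := lam i2 + lam i3.

(* Main.v *)
Require Import Defs.
From mathcomp Require Import all_boot all_order all_algebra reals.
From HB Require Import structures.
From mathcomp Require Import ring lra zify.
Set Implicit Arguments. Unset Strict Implicit. Unset Printing Implicit Defensive.
Import Order.TTheory GRing.Theory Num.Theory.
Local Open Scope ring_scope.
Definition qf (n : nat) : nat :=
  match n with 0 => 4 | 1 => 5 | 2 => 6 | 3 => 7 | 4 => 0 | 5 => 1 | 6 => 2 | 7 => 3 | n => n end%N.

Definition ix (a : nat) : 'I_(4 + 4) := @inord 7 a.
Definition e (R : realType) (X : 'M[R]_(4 + 4)) (a b : nat) : R := X (ix a) (ix b).
Arguments e : simpl never.

Lemma ord4P (i : 'I_4) : [\/ i = i0, i = i1, i = i2 | i = i3].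
Proof.
case: i => [[|[|[|[|i]]]] Hi] //.
- by constructor 1; apply/val_inj.
- by constructor 2; apply/val_inj.
- by constructor 3; apply/val_inj.
- by constructor 4; apply/val_inj.
Qed.

Lemma ixK a : (a < 8)%N -> val (ix a) = a.
Proof. by move=> h; exact: inordK. Qed.

Lemma qf_lt a : (a < 8)%N -> (qf a < 8)%N.
Proof. by case: a => [|[|[|[|[|[|[|[|a]]]]]]]]. Qed.
Lemma qfK a : (a < 8)%N -> qf (qf a) = a.
Proof. by case: a => [|[|[|[|[|[|[|[|a]]]]]]]]. Qed.

Section Gen.
Variable R : realType.
Implicit Types X Y Z k : 'M[R]_(4 + 4).

Lemma eE X (a b : 'I_(4 + 4)) : X a b = e X a b.
Proof. by rewrite /e /ix !inord_val. Qed.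

Lemma lshE (i : 'I_4) : lsh i = ix i.
Proof. apply/val_inj; rewrite /= ixK //; exact: (leq_trans (ltn_ord i)). Qed.
Lemma rshE (i : 'I_4) : rsh i = ix (4 + i).
Proof. by apply/val_inj; rewrite /= ixK // ltn_add2l. Qed.

Definition good (f : nat -> nat) := forall a, (a < 8)%N -> (f a < 8)%N /\ f (f a) = a.

Definition spm (f : nat -> nat) (s : nat -> R) : 'M[R]_(4 + 4) :=
  \matrix_(a, b) if val b == f (val a) then s (val a) else 0.

Lemma spm_mull f s X (gf : good f) (a b : 'I_(4+4)) :
  (spm f s *m X) a b = s a * X (ix (f a)) b.
Proof.
have [lt _] := gf _ (ltn_ord a).
rewrite mxE (bigD1 (ix (f a))) //= mxE ixK // eqxx. rewrite big1 ?addr0 // => c hc.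
rewrite mxE; case: eqP => [h|] /=; last by rewrite mul0r.
by case/eqP: hc; apply/val_inj; rewrite /= ixK.
Qed.

Lemma spm_mulr f s X (gf : good f) (a b : 'I_(4+4)) :
  (X *m (spm f s)^T) a b = s b * X a (ix (f b)).
Proof. by rewrite -[X]trmxK -trmx_mul mxE spm_mull // !mxE. Qed.

Lemma Ad_e f s X (gf : good f) a b : (a < 8)%N -> (b < 8)%N ->
  e (Ad (spm f s) X) a b = s a * s b * e X (f a) (f b).
Proof.
move=> ha hb; rewrite /e /Ad spm_mulr // spm_mull // !ixK //.
by rewrite mulrA [s b * _]mulrC.
Qed.

Lemma spm_tr f s (gf : good f) : (spm f s)^T = spm f (fun a => s (f a)).
Proof.
apply/matrixP => a b; rewrite !mxE.
have [la fa] := gf _ (ltn_ord a); have [lb fb] := gf _ (ltn_ord b).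
case: eqP => [->|h]; first by rewrite fb eqxx.
case: eqP => // h'; case: h; by rewrite h' fa.
Qed.

Lemma good_qf : good qf.
Proof. by move=> a h; split; [apply: qf_lt|apply: qfK]. Qed.

Lemma QformE : Qform R = spm qf (fun _ => 1).
Proof.
apply/matrixP => a b; rewrite /Qform -(splitK a) -(splitK b).
case: (split a) => i; case: (split b) => j /=.
- rewrite block_mxEul !mxE.
  by case: (ord4P i) => ->; case: (ord4P j) => ->.
- rewrite block_mxEur !mxE.
  by case: (ord4P i) => ->; case: (ord4P j) => ->.
- rewrite block_mxEdl !mxE.
  by case: (ord4P i) => ->; case: (ord4P j) => ->.
- rewrite block_mxEdr !mxE.
  by case: (ord4P i) => ->; case: (ord4P j) => ->.
Qed.

Lemma Qsym : (Qform R)^T = Qform R.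
Proof. by rewrite QformE spm_tr //; exact: good_qf. Qed.

Lemma in_gE X : in_g X <-> forall a b, (a < 8)%N -> (b < 8)%N -> e X (qf b) a + e X (qf a) b = 0.
Proof.
have key : forall a b : 'I_(4+4), (X^T *m Qform R + Qform R *m X) a b
   = X (ix (qf b)) a + X (ix (qf a)) b.
  move=> a b; rewrite mxE; congr (_ + _).
    rewrite -[X^T *m _]trmxK trmx_mul trmxK Qsym mxE QformE spm_mull //; last exact: good_qf.
    by rewrite mul1r.
  by rewrite QformE spm_mull ?mul1r //; exact: good_qf.
split.
  move=> h a b ha hb; have := key (ix a) (ix b); rewrite /in_g in h; rewrite h mxE !ixK //.
move=> h; apply/matrixP => a b; rewrite key mxE !eE !ixK ?qf_lt // h //.
Qed.

Lemma in_kE X : in_k X -> (forall a b, (a < 8)%N -> (b < 8)%N -> e X (qf b) a + e X (qf a) b = 0)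
  /\ (forall a b, (a < 8)%N -> (b < 8)%N -> e X b a = - e X a b).
Proof.
move=> [/in_gE hg ht]; split => // a b ha hb.
by move: (congr1 (fun M : 'M[R]_(4+4) => M (ix a) (ix b)) ht); rewrite !mxE /e.
Qed.

Lemma in_kI X : (forall a b, (a < 8)%N -> (b < 8)%N -> e X (qf b) a + e X (qf a) b = 0) ->
  (forall a b, (a < 8)%N -> (b < 8)%N -> e X b a = - e X a b) -> in_k X.
Proof.
move=> hg hk; split; first by apply/in_gE.
apply/matrixP => a b; rewrite !mxE !eE.
have := hk _ _ (ltn_ord a) (ltn_ord b); rewrite /e /ix !inord_val => ->.
by [].
Qed.


Lemma spmE f s (gf : good f) a b : (a < 8)%N -> (b < 8)%N ->
  e (spm f s) a b = if b == f a then s a else 0.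
Proof. by move=> ha hb; rewrite /e mxE !ixK. Qed.

Lemma spm_K0 f s : good f -> (forall a, (a < 8)%N -> s a * s a = 1) ->
  (forall a, (a < 8)%N -> f (qf a) = qf (f a)) -> (forall a, (a < 8)%N -> s (qf a) = s a) ->
  \det (ulsubmx (spm f s) + ursubmx (spm f s)) = 1 ->
  \det (ulsubmx (spm f s) - ursubmx (spm f s)) = 1 -> in_K0 (spm f s).
Proof.
move=> gf hs hfq hsq d1 d2; split; last split => //.
  apply: mulmx1C; apply/matrixP => a b; rewrite spm_mulr // !mxE ixK; last by case: (gf _ (ltn_ord b)).
  case: (eqVneq a b) => [->|nab]; first by rewrite eqxx /= mulrC (hs _ (ltn_ord b)).
  have -> : (f b == f a) = false.
    apply/negbTE/eqP => h; case/eqP: nab; apply/val_inj.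
    by rewrite /= -(proj2 (gf _ (ltn_ord a))) -h (proj2 (gf _ (ltn_ord b))).
  by rewrite mulr0.
apply/matrixP => a b.
rewrite spm_mull // QformE spm_mull; last exact: good_qf.
have [fa _] := gf _ (ltn_ord a).
rewrite !mxE !ixK ?qf_lt // mul1r hfq // hsq //.
by case: eqP => _; rewrite ?mulr1 ?mulr0.
Qed.

Lemma Ad_g k X : k *m Qform R = Qform R *m k -> in_g X -> in_g (Ad k X).
Proof.
rewrite /in_g /Ad => hk hX.
have hT : k^T *m Qform R = Qform R *m k^T.
  by rewrite -[Qform R in LHS]Qsym -trmx_mul -hk trmx_mul Qsym.
have -> : (k *m X *m k^T)^T = k *m X^T *m k^T by rewrite !trmx_mul trmxK mulmxA.
transitivity (k *m (X^T *m Qform R + Qform R *m X) *m k^T); last by rewrite hX mulmx0 mul0mx.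
rewrite mulmxDr mulmxDl; congr (_ + _).
  by rewrite -!mulmxA hT.
by rewrite !mulmxA hk.
Qed.

Lemma Ad_inv k X : k *m k = 1%:M -> Ad k (Ad k X) = X.
Proof.
move=> h; rewrite /Ad.
have -> : k *m (k *m X *m k^T) *m k^T = (k *m k) *m X *m (k *m k)^T.
  by rewrite trmx_mul !mulmxA.
by rewrite h trmx1 mul1mx mulmx1.
Qed.

Lemma spm_sq f s : good f -> (forall a, (a < 8)%N -> s a * s (f a) = 1) -> spm f s *m spm f s = 1%:M.
Proof.
move=> gf hs; apply/matrixP => a b; rewrite spm_mull // !mxE.
have [fa ffa] := gf _ (ltn_ord a).
rewrite ixK // ffa; case: (eqVneq a b) => [->|nab]; first by rewrite eqxx /= (hs _ (ltn_ord b)).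
case: eqP => [h|_]; last by rewrite mulr0.
by case/eqP: nab; apply/val_inj.
Qed.

Definition Pz (L : seq (nat * nat)) X := forall ab, ab \in L -> e X ab.1 ab.2 = 0.

Lemma PzE ab L X : Pz (ab :: L) X <-> e X ab.1 ab.2 = 0 /\ Pz L X.
Proof.
split.
  by move=> h; split; [apply: h; rewrite inE eqxx | move=> c hc; apply: h; rewrite inE hc orbT].
by move=> [h1 h2] c; rewrite inE => /orP [/eqP -> //|]; apply: h2.
Qed.
Lemma Pz0 X : Pz [::] X.
Proof. by []. Qed.

Lemma spm_KTheta Th L f s :
  (forall X, in_p Th X <-> in_g X /\ Pz L X) -> good f ->
  (forall a, (a < 8)%N -> s a * s a = 1) ->
  (forall a, (a < 8)%N -> s a * s (f a) = 1) ->
  (forall a, (a < 8)%N -> f (qf a) = qf (f a)) -> (forall a, (a < 8)%N -> s (qf a) = s a) ->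
  all (fun ab => [&& (ab.1 < 8)%N, (ab.2 < 8)%N & (f ab.1, f ab.2) \in L]) L ->
  \det (ulsubmx (spm f s) + ursubmx (spm f s)) = 1 ->
  \det (ulsubmx (spm f s) - ursubmx (spm f s)) = 1 -> in_KTheta Th (spm f s).
Proof.
move=> hp gf hs hsf hfq hsq hL d1 d2.
have K0 := spm_K0 gf hs hfq hsq d1 d2.
split => //.
have step : forall X, in_p Th X -> in_p Th (Ad (spm f s) X).
  move=> X /hp [hg hz]; apply/hp; split; first by apply: Ad_g => //; case: K0 => _ [].
  move=> [a b] hab; have /and3P [ha hb hm] := allP hL _ hab.
  by rewrite /= Ad_e // (hz _ hm) mulr0.
move=> X; split; first exact: step.
by move=> h; rewrite -(Ad_inv X (spm_sq gf hsf)); apply: step.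
Qed.

Lemma trE X Y : \tr (X *m Y) = \sum_(0 <= a < 8) \sum_(0 <= b < 8) e X a b * e Y b a.
Proof.
rewrite big_mkord; apply: eq_bigr => a _; rewrite mxE big_mkord; apply: eq_bigr => b _.
by rewrite !eE.
Qed.

Definition sp (l : seq (nat * nat * R)) (a b : nat) : R :=
  foldr (fun t acc => if (t.1.1 == a) && (t.1.2 == b) then t.2 else acc) 0 l.
Definition mk (l : seq (nat * nat * R)) : 'M[R]_(4 + 4) := \matrix_(a, b) sp l (val a) (val b).
Lemma mkE l a b : (a < 8)%N -> (b < 8)%N -> e (mk l) a b = sp l a b.
Proof. by move=> ha hb; rewrite /e mxE !ixK. Qed.

Definition parA X i j := e X i j.
Definition parB X i j := e X i (qf j).
End Gen.
Arguments parA : simpl never.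
Arguments parB : simpl never.
Arguments Pz : simpl never.

Definition skw (R : realType) (P : nat -> nat -> R) (i j : nat) : R :=
  match Nat.compare i j with Lt => P i j | Gt => - P j i | Eq => 0 end.
Definition hi (n : nat) : bool := match n with 4 | 5 | 6 | 7 => true | _ => false end%N.
Definition m4 (n : nat) : nat := match n with 4 => 0 | 5 => 1 | 6 => 2 | 7 => 3 | n => n end%N.
Definition kn (R : realType) (X : 'M[R]_(4 + 4)) (a b : nat) : R :=
  if hi a == hi b then skw (parA X) (m4 a) (m4 b) else skw (parB X) (m4 a) (m4 b).

Ltac pairs16 H x y z w := have := H x x isT isT; have := H x y isT isT; have := H x z isT isT; have := H x w isT isT; have := H y x isT isT; have := H y y isT isT; have := H y z isT isT; have := H y w isT isT; have := H z x isT isT; have := H z y isT isT; have := H z z isT isT; have := H z w isT isT; have := H w x isT isT; have := H w y isT isT; have := H w z isT isT; have := H w w isT isT.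


Ltac case8 a h := case: a h => [|[|[|[|[|[|[|[|?]]]]]]]] h //.

Lemma nfE (R : realType) (X : 'M[R]_(4 + 4)) : in_k X ->
  forall a b, (a < 8)%N -> (b < 8)%N -> e X a b = kn X a b.
Proof.
move/in_kE => [hg hk].
have h3 : forall x y, (x < 8)%N -> (y < 8)%N -> e X (qf y) x = e X y (qf x).
  move=> x y hx hy; have := hg x y hx hy; have := hk (qf x) y (qf_lt hx) hy; lra.
move=> a b ha hb.
case8 a ha; case8 b hb; rewrite /kn /skw /=; rewrite /parA /parB /=;
match goal with |- e X ?a ?b = _ =>
  have := hk a b isT isT; have := hk (qf a) (qf b) isT isT; have := hk b a isT isT; have := hk (qf b) (qf a) isT isT; have := h3 b (qf a) isT isT; have := h3 a (qf b) isT isT end; simpl; intros; lra.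
Qed.

Definition at2 (R : Type) (M : 'M[R]_2) (a b : nat) := M (inord a) (inord b).
Arguments at2 : simpl never.

Lemma det2 (R : comNzRingType) (M : 'M[R]_2) :
  \det M = at2 M 0 0 * at2 M 1 1 - at2 M 0 1 * at2 M 1 0.
Proof.
have HM: forall i j : 'I_2, M i j = at2 M i j by move=> i j; rewrite /at2 !inord_val.
rewrite (expand_det_row _ 0) !big_ord_recl big_ord0 /cofactor !det_mx11 !mxE /=.
rewrite !HM /= (_ : bump 0 0 = 1)%N // (_ : bump 1 0 = 0)%N //.
rewrite expr0 expr1; ring.
Qed.

Definition Ekc (R : realType) (k : 'M[R]_(4 + 4)) (c : R) (a b : nat) := e k a b + c * e k a (qf b).

Lemma det_ulur (R : realType) (k : 'M[R]_(4 + 4)) (c : R) :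
  (forall a b, (2 <= a)%N -> (a < 4)%N -> (b < 2)%N -> Ekc k c a b = 0) ->
  \det (ulsubmx k + c *: ursubmx k) =
  (Ekc k c 0 0 * Ekc k c 1 1 - Ekc k c 0 1 * Ekc k c 1 0) *
  (Ekc k c 2 2 * Ekc k c 3 3 - Ekc k c 2 3 * Ekc k c 3 2).
Proof.
move=> h.
pose M : 'M[R]_(2 + 2) := ulsubmx k + c *: ursubmx k.
have ME : forall a b, (a < 4)%N -> (b < 4)%N -> M (inord a) (inord b) = Ekc k c a b.
  move=> a b ha hb; rewrite /M /Ekc /e !mxE.
  have -> : lshift 4 (inord a : 'I_(2 + 2)) = ix a.
    by apply/val_inj; rewrite /= /ix !inordK // (leq_trans ha).
  have -> : lshift 4 (inord b : 'I_(2 + 2)) = ix b.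
    by apply/val_inj; rewrite /= /ix !inordK // (leq_trans hb).
  have -> : rshift 4 (inord b : 'I_(2 + 2)) = ix (qf b).
    apply/val_inj; rewrite /= /ix !inordK //; first by case: b hb => [|[|[|[|b]]]].
    by case: b hb => [|[|[|[|b]]]].
  by [].
have L2 : forall a, (a < 2)%N -> lshift 2 (inord a : 'I_2) = inord a :> 'I_(2 + 2).
  by move=> a ha; apply/val_inj; rewrite /= !inordK // (leq_trans ha).
have R2 : forall a, (a < 2)%N -> rshift 2 (inord a : 'I_2) = inord (2 + a) :> 'I_(2 + 2).
  by move=> a ha; apply/val_inj; rewrite /= !inordK // ltn_add2l.
have EM : ulsubmx k + c *: ursubmx k = M by [].
clearbody M; rewrite EM.
have D0 : dlsubmx M = 0.
  apply/matrixP => i j; rewrite !mxE.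
  have hi := ltn_ord i; have hj := ltn_ord j.
  rewrite -[i]inord_val -[j]inord_val L2 // R2 // ME; try lia.
  by apply: h; lia.
have -> : M = block_mx (ulsubmx M) (ursubmx M) 0 (drsubmx M).
  by rewrite -D0 submxK.
rewrite (det_ublock (ulsubmx M) (ursubmx M) (drsubmx M)) !det2 /at2 !mxE !L2 // !R2 // !ME //.
Qed.

Lemma Ad_fixI (R : realType) f (s : nat -> R) (X : 'M[R]_(4+4)) : good f ->
  (forall a b, (a < 8)%N -> (b < 8)%N -> s a * s b * e X (f a) (f b) = e X a b) ->
  Ad (spm f s) X = X.
Proof.
move=> gf h; apply/matrixP => a b.
by rewrite eE [X a b]eE Ad_e // h.
Qed.

Lemma Ad_fixE (R : realType) f (s : nat -> R) (X : 'M[R]_(4+4)) : good f ->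
  Ad (spm f s) X = X ->
  forall a b, (a < 8)%N -> (b < 8)%N -> e X a b = s a * s b * e X (f a) (f b).
Proof. by move=> gf h a b ha hb; rewrite -{1}h Ad_e. Qed.
Lemma eZ (R : realType) (c : R) (M : 'M[R]_(4+4)) a b : e (c *: M) a b = c * e M a b.
Proof. by rewrite /e mxE. Qed.
Lemma eN (R : realType) (M : 'M[R]_(4+4)) a b : e (- M) a b = - e M a b.
Proof. by rewrite /e mxE. Qed.
Lemma sq_neg (R : realType) (c : R) : c * (c * 1) = -1 -> False.
Proof. by move=> h; nra. Qed.
Lemma final (R : realType) Th (J : 'M[R]_(4+4) -> 'M[R]_(4+4)) X0 (c : R) a b :
  invariant_acs Th J -> in_m Th X0 ->
  (forall X, in_m Th X -> J (c *: X) = c *: J X) ->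
  J X0 = c *: X0 -> e X0 a b = 1 -> False.
Proof.
move=> HJ hX hs hc he.
have JJ := HJ.2.2.1 _ hX.
rewrite hc hs // hc in JJ.
have := congr1 (fun M : 'M[R]_(4+4) => e M a b) JJ; rewrite /= !eZ eN he.
exact: sq_neg.
Qed.

Ltac nspan := let cs := fresh "cs" in let Hs := fresh "Hs" in let Hc := fresh "Hc" in
  move=> [cs [Hs Hc]]; case: cs Hs Hc => [|? [|? [|? [|]]]] // _;
  rewrite !big_cons big_nil /= => /rowP H;
  have := H i0; have := H i1; have := H i2; have := H i3; rewrite !mxE /=; lia.
Ltac yspan c1 c2 c3 := exists [:: c1; c2; c3]; split => //; apply/rowP;
  let k := fresh "k" in move=> k;
  rewrite !big_cons big_nil /=; case: (ord4P k) => ->; rewrite !mxE /=; lia.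

Lemma h1E (R : realType) (X : 'M[R]_(4+4)) (i j : 'I_4) : X (lsh i) (lsh j) = e X i j.
Proof. by rewrite !lshE. Qed.
Lemma h2E (R : realType) (X : 'M[R]_(4+4)) (i j : 'I_4) : X (rsh i) (lsh j) = e X (4 + i) j.
Proof. by rewrite rshE lshE. Qed.

Definition Th1 := [:: a1; a2; a3].
Definition L1 : seq (nat * nat) :=
  [:: (4,1); (4,2); (4,3); (5,2); (5,3); (6,3); (5,0); (6,0); (7,0); (6,1); (7,1); (7,2)]%N.

Lemma inpE1 (R : realType) (X : 'M[R]_(4+4)) : in_p Th1 X <-> in_g X /\ Pz L1 X.
Proof.
split.
  move=> [hg [h1 h2]]; split => //; have hg' := proj1 (in_gE X) hg.
  have b01 : e X 4 1 = 0 by rewrite -(h2E X i0 i1); apply: h2 => //; nspan.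
  have b02 : e X 4 2 = 0 by rewrite -(h2E X i0 i2); apply: h2 => //; nspan.
  have b03 : e X 4 3 = 0 by rewrite -(h2E X i0 i3); apply: h2 => //; nspan.
  have b12 : e X 5 2 = 0 by rewrite -(h2E X i1 i2); apply: h2 => //; nspan.
  have b13 : e X 5 3 = 0 by rewrite -(h2E X i1 i3); apply: h2 => //; nspan.
  have b23 : e X 6 3 = 0 by rewrite -(h2E X i2 i3); apply: h2 => //; nspan.
  have := hg' 1 0 isT isT; have := hg' 2 0 isT isT; have := hg' 3 0 isT isT;
  have := hg' 2 1 isT isT; have := hg' 3 1 isT isT; have := hg' 3 2 isT isT; simpl => *.
  rewrite !PzE /=; do 12 (split; first lra); exact: Pz0.
move=> [hg hz]; split => //; split.
  move=> i j; case: (ord4P i) => ->; case: (ord4P j) => -> // _ ns; exfalso; apply: ns.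
  - by yspan (-1)%Z (0)%Z (0)%Z.
  - by yspan (-1)%Z (-1)%Z (0)%Z.
  - by yspan (0)%Z (-1)%Z (0)%Z.
  - by yspan (-1)%Z (-1)%Z (-1)%Z.
  - by yspan (0)%Z (-1)%Z (-1)%Z.
  - by yspan (0)%Z (0)%Z (-1)%Z.
move=> i j; case: (ord4P i) => ->; case: (ord4P j) => -> // _ _; rewrite h2E; exact: (hz (_, _)).
Qed.

Section Common.
Variable R : realType.

Lemma m0 Th : in_m Th (0 : 'M[R]_(4+4)).
Proof.
split; last by move=> Y _; rewrite mul0mx mxtrace0.
split; last by rewrite trmx0 oppr0.
by rewrite /in_g trmx0 mul0mx mulmx0 addr0.
Qed.

Lemma detPlus (k : 'M[R]_(4+4)) :
  (forall a b, (2 <= a)%N -> (a < 4)%N -> (b < 2)%N -> Ekc k 1 a b = 0) ->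
  \det (ulsubmx k + ursubmx k) =
  (Ekc k 1 0 0 * Ekc k 1 1 1 - Ekc k 1 0 1 * Ekc k 1 1 0) *
  (Ekc k 1 2 2 * Ekc k 1 3 3 - Ekc k 1 2 3 * Ekc k 1 3 2).
Proof. by move=> h; rewrite -det_ulur // scale1r. Qed.

Lemma detMinus (k : 'M[R]_(4+4)) :
  (forall a b, (2 <= a)%N -> (a < 4)%N -> (b < 2)%N -> Ekc k (-1) a b = 0) ->
  \det (ulsubmx k - ursubmx k) =
  (Ekc k (-1) 0 0 * Ekc k (-1) 1 1 - Ekc k (-1) 0 1 * Ekc k (-1) 1 0) *
  (Ekc k (-1) 2 2 * Ekc k (-1) 3 3 - Ekc k (-1) 2 3 * Ekc k (-1) 3 2).
Proof. by move=> h; rewrite -det_ulur // scaleN1r. Qed.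

Definition sg1 (n : nat) : R := match n with 1%N | 3%N | 5%N | 7%N => -1 | _ => 1 end.
Definition sone (n : nat) : R := 1.
Definition idf (n : nat) : nat := n.

Lemma J_scale Th (J : 'M[R]_(4+4) -> 'M[R]_(4+4)) X (c : R) :
  invariant_acs Th J -> in_m Th X -> J (c *: X) = c *: J X.
Proof.
move=> [_ [Hlin _]] hX.
have J0 : J 0 = 0.
  have h := Hlin 1 0 0 (m0 Th) (m0 Th); rewrite !scale1r !addr0 in h.
  have : J 0 + J 0 - J 0 = J 0 - J 0 by rewrite -h.
  by rewrite addrK subrr.
by have := Hlin c X 0 hX (m0 Th); rewrite !addr0 J0 addr0.
Qed.

Lemma J_fix Th (J : 'M[R]_(4+4) -> 'M[R]_(4+4)) X k :
  invariant_acs Th J -> in_m Th X -> in_KTheta Th k -> Ad k X = X -> Ad k (J X) = J X.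
Proof. by move=> [_ [_ [_ Hc]]] hX hk hf; rewrite -Hc // hf. Qed.

End Common.

Ltac allab := let a := fresh "a" in let b := fresh "b" in let ha := fresh "ha" in
  let hb := fresh "hb" in move=> a b ha hb; case8 a ha; case8 b hb.
Ltac all1 := let a := fresh "a" in let ha := fresh "ha" in move=> a ha; case8 a ha.
Ltac expand_sum := rewrite /index_iota !subn0 /= !big_cons !big_nil.

Definition f12 (n : nat) : nat :=
  match n with 0 => 1 | 1 => 0 | 2 => 3 | 3 => 2 | 4 => 5 | 5 => 4 | 6 => 7 | 7 => 6 | n => n end%N.

Lemma good_idf : good idf. Proof. by all1. Qed.
Lemma good_f12 : good f12. Proof. by all1. Qed.

Section Case1.
Variable R : realType.
Definition t3 (a b : nat) (v : R) := (a, b, v).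

Definition X01 : 'M[R]_(4+4) :=
  mk [:: t3 0 6 (1); t3 2 4 (-1); t3 1 7 (1); t3 3 5 (-1); t3 4 2 (1); t3 6 0 (-1); t3 5 3 (1); t3 7 1 (-1)].
Definition Z1 : 'M[R]_(4+4) := mk [:: t3 0 2 (1); t3 2 0 (-1); t3 4 6 (1); t3 6 4 (-1)].
Definition k11 : 'M[R]_(4+4) := spm idf (@sg1 R).
Definition k12 : 'M[R]_(4+4) := spm f12 (@sone R).

Lemma k11_K : in_KTheta Th1 k11.
Proof.
apply: spm_KTheta; first exact: inpE1; first exact: good_idf.
- by all1; rewrite /sg1 /=; lra.
- by all1; rewrite /sg1 /idf /=; lra.
- by all1.
- by all1.
- by [].
- rewrite detPlus; first by rewrite /Ekc !spmE //= ?eqxx /=; lra.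
  move=> a b h1 h2 h3; case: a h1 h2 => [|[|[|[|?]]]] // h1 h2; case: b h3 => [|[|?]] // h3;
  rewrite /Ekc !spmE //=; lra.
- rewrite detMinus; first by rewrite /Ekc !spmE //= ?eqxx /=; lra.
  move=> a b h1 h2 h3; case: a h1 h2 => [|[|[|[|?]]]] // h1 h2; case: b h3 => [|[|?]] // h3;
  rewrite /Ekc !spmE //=; lra.
Qed.

Lemma k12_K : in_KTheta Th1 k12.
Proof.
apply: spm_KTheta; first exact: inpE1; first exact: good_f12.
- by all1; rewrite /sone /=; lra.
- by all1; rewrite /sone /=; lra.
- by all1.
- by all1.
- by [].
- rewrite detPlus; first by rewrite /Ekc !(spmE _ good_f12) //= ?eqxx /sone /=; lra.
  move=> a b h1 h2 h3; case: a h1 h2 => [|[|[|[|?]]]] // h1 h2; case: b h3 => [|[|?]] // h3;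
  rewrite /Ekc !(spmE _ good_f12) //=; lra.
- rewrite detMinus; first by rewrite /Ekc !(spmE _ good_f12) //= ?eqxx /sone /=; lra.
  move=> a b h1 h2 h3; case: a h1 h2 => [|[|[|[|?]]]] // h1 h2; case: b h3 => [|[|?]] // h3;
  rewrite /Ekc !(spmE _ good_f12) //=; lra.
Qed.

Lemma Z1_kT : in_kTheta Th1 Z1.
Proof.
have hk : in_k Z1 by apply: in_kI; allab; rewrite !mkE //=; lra.
split => //; apply/inpE1; split; first by case: hk.
by rewrite /L1 !PzE /= !mkE //=; do 12 (split => //); exact: Pz0.
Qed.

End Case1.

Section S. Variable R : realType.
Notation X01 := (@X01 R).

Lemma X01_k : in_k X01.
Proof. by apply: in_kI; allab; rewrite !mkE //=; lra. Qed.
Lemma X01_m : in_m Th1 X01.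
Proof.
split; first exact: X01_k.
move=> Z [hZk /inpE1 [_ hz]]; rewrite trE. expand_sum. rewrite !mkE //=.
(move: hz; rewrite /L1 !PzE /= !(nfE hZk) // /kn /skw /=).
move=> [? [? [? [? [? [? [? [? [? [? [? [? _]]]]]]]]]]]]; lra.
Qed.

Lemma X01_fix1 : Ad (k11 R) X01 = X01.
Proof. apply: Ad_fixI; first exact: good_idf. by allab; rewrite !mkE //= /sg1 /=; lra. Qed.
Lemma X01_fix2 : Ad (k12 R) X01 = X01.
Proof. apply: Ad_fixI; first exact: good_f12. by allab; rewrite !mkE //= /sone /=; lra. Qed.

Lemma case1 : ~ admits_K_invariant_acs R Th1.
Proof.
move=> [J HJ].
have HX0 := X01_m.
have hY := HJ.1 _ HX0.
set Y := J X01 in hY *.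
have F1 := Ad_fixE good_idf (J_fix HJ HX0 (k11_K R) X01_fix1).
have F2 := Ad_fixE good_f12 (J_fix HJ HX0 (k12_K R) X01_fix2).
case: hY => hYk hYo.
have O := hYo _ (Z1_kT R).
rewrite trE /index_iota !subn0 /= !big_cons !big_nil !mkE //= in O.
have nfY := nfE hYk.
have Yc : Y = parB Y 0 2 *: X01.
  move: O (F1 0 1 isT isT) (F1 0 2 isT isT) (F1 0 3 isT isT) (F1 1 2 isT isT)
    (F1 1 3 isT isT) (F1 2 3 isT isT) (F1 0 5 isT isT) (F1 0 6 isT isT) (F1 0 7 isT isT)
    (F1 1 6 isT isT) (F1 1 7 isT isT) (F1 2 7 isT isT) (F2 0 2 isT isT) (F2 0 6 isT isT).
  rewrite !nfY // /kn /skw /sg1 /idf /sone /= => *.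
  apply/matrixP => a b; rewrite mxE !eE; case: a b => [a ha] [b hb] /=.
  case8 a ha; case8 b hb; rewrite nfY // mkE // /kn /skw /=; lra.
apply: (final (a := 0%N) (b := 6%N) HJ HX0 _ Yc); first by move=> X hX; exact: (J_scale _ HJ hX).
by rewrite /X01 mkE.
Qed.
End S.

Definition Th2 := [:: a1; a2; a4].
Definition L2 : seq (nat * nat) := [:: (3,0); (3,1); (3,2); (4,1); (4,2); (5,2); (4,7); (5,7); (6,7); (5,0); (6,0); (6,1)]%N.

Lemma inpE2 (R : realType) (X : 'M[R]_(4+4)) : in_p Th2 X <-> in_g X /\ Pz L2 X.
Proof.
split.
  move=> [hg [h1 h2]]; split => //; have hg' := proj1 (in_gE X) hg.
  have : e X 3 0 = 0 by rewrite -(h1E X i3 i0); apply: h1 => //; nspan.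
  have : e X 3 1 = 0 by rewrite -(h1E X i3 i1); apply: h1 => //; nspan.
  have : e X 3 2 = 0 by rewrite -(h1E X i3 i2); apply: h1 => //; nspan.
  have : e X 4 1 = 0 by rewrite -(h2E X i0 i1); apply: h2 => //; nspan.
  have : e X 4 2 = 0 by rewrite -(h2E X i0 i2); apply: h2 => //; nspan.
  have : e X 5 2 = 0 by rewrite -(h2E X i1 i2); apply: h2 => //; nspan.
  have := hg' 0 7 isT isT; have := hg' 1 7 isT isT; have := hg' 2 7 isT isT; have := hg' 1 0 isT isT; have := hg' 2 0 isT isT; have := hg' 2 1 isT isT; simpl => *.
  rewrite /L2 !PzE /=; do 12 (split; first lra); exact: Pz0.
move=> [hg hz]; split => //; split.
  move=> i j; case: (ord4P i) => ->; case: (ord4P j) => -> // _ ns.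
  - by exfalso; apply: ns; yspan (-1)%Z (0)%Z (0)%Z.
  - by exfalso; apply: ns; yspan (-1)%Z (-1)%Z (0)%Z.
  - by exfalso; apply: ns; yspan (0)%Z (-1)%Z (0)%Z.
  - by rewrite h1E; exact: (hz (_, _)).
  - by rewrite h1E; exact: (hz (_, _)).
  - by rewrite h1E; exact: (hz (_, _)).
move=> i j; case: (ord4P i) => ->; case: (ord4P j) => -> // _ ns.
  - by rewrite h2E; exact: (hz (_, _)).
  - by rewrite h2E; exact: (hz (_, _)).
  - by exfalso; apply: ns; yspan (-1)%Z (-1)%Z (-1)%Z.
  - by rewrite h2E; exact: (hz (_, _)).
  - by exfalso; apply: ns; yspan (0)%Z (-1)%Z (-1)%Z.
  - by exfalso; apply: ns; yspan (0)%Z (0)%Z (-1)%Z.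
Qed.

Definition f2 (n : nat) : nat := match n with 0 => 1 | 1 => 0 | 2 => 7 | 3 => 6 | 4 => 5 | 5 => 4 | 6 => 3 | 7 => 2 | n => n end%N.
Lemma good_f2 : good f2. Proof. by all1. Qed.

Section Case2.
Variable R : realType.
Definition t3_2 (a b : nat) (v : R) := (a, b, v).
Definition X02 : 'M[R]_(4+4) := mk [:: t3_2 1 3 (1); t3_2 3 1 (-1); t3_2 5 7 (1); t3_2 7 5 (-1); t3_2 0 6 (1); t3_2 2 4 (-1); t3_2 4 2 (1); t3_2 6 0 (-1)].
Definition Z2 : 'M[R]_(4+4) := mk [:: t3_2 0 2 (1); t3_2 2 0 (-1); t3_2 4 6 (1); t3_2 6 4 (-1)].
Definition k21 : 'M[R]_(4+4) := spm idf (@sg1 R).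
Definition k22 : 'M[R]_(4+4) := spm f2 (@sone R).

Lemma k21_K : in_KTheta Th2 k21.
Proof.
apply: spm_KTheta; first exact: inpE2; first exact: good_idf.
- by all1; rewrite /sg1 /=; lra.
- by all1; rewrite /sg1 /idf /=; lra.
- by all1.
- by all1.
- by [].
- rewrite detPlus; first by rewrite /Ekc !(spmE _ good_idf) //= ?eqxx /sg1 /=; lra.
  move=> a b h1 h2 h3; case: a h1 h2 => [|[|[|[|?]]]] // h1 h2; case: b h3 => [|[|?]] // h3;
  rewrite /Ekc !(spmE _ good_idf) //=; lra.
- rewrite detMinus; first by rewrite /Ekc !(spmE _ good_idf) //= ?eqxx /sg1 /=; lra.
  move=> a b h1 h2 h3; case: a h1 h2 => [|[|[|[|?]]]] // h1 h2; case: b h3 => [|[|?]] // h3;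
  rewrite /Ekc !(spmE _ good_idf) //=; lra.
Qed.

Lemma k22_K : in_KTheta Th2 k22.
Proof.
apply: spm_KTheta; first exact: inpE2; first exact: good_f2.
- by all1; rewrite /sone /=; lra.
- by all1; rewrite /sone /=; lra.
- by all1.
- by all1.
- by [].
- rewrite detPlus; first by rewrite /Ekc !(spmE _ good_f2) //= ?eqxx /sone /=; lra.
  move=> a b h1 h2 h3; case: a h1 h2 => [|[|[|[|?]]]] // h1 h2; case: b h3 => [|[|?]] // h3;
  rewrite /Ekc !(spmE _ good_f2) //=; lra.
- rewrite detMinus; first by rewrite /Ekc !(spmE _ good_f2) //= ?eqxx /sone /=; lra.
  move=> a b h1 h2 h3; case: a h1 h2 => [|[|[|[|?]]]] // h1 h2; case: b h3 => [|[|?]] // h3;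
  rewrite /Ekc !(spmE _ good_f2) //=; lra.
Qed.

Lemma Z2_kT : in_kTheta Th2 Z2.
Proof.
have hk : in_k Z2 by apply: in_kI; allab; rewrite !mkE //=; lra.
split => //; apply/inpE2; split; first by case: hk.
by rewrite /L2 !PzE /= !mkE //=; do 12 (split => //); exact: Pz0.
Qed.

Lemma X02_k : in_k X02.
Proof. by apply: in_kI; allab; rewrite !mkE //=; lra. Qed.

Lemma X02_m : in_m Th2 X02.
Proof.
split; first exact: X02_k.
move=> Z [hZk /inpE2 [_ hz]]; rewrite trE; expand_sum; rewrite !mkE //=.
move: hz; rewrite /L2 !PzE /= !(nfE hZk) // /kn /skw /=.
move=> [? [? [? [? [? [? [? [? [? [? [? [? _]]]]]]]]]]]]; lra.
Qed.

Lemma X02_fix1 : Ad k21 X02 = X02.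
Proof. apply: Ad_fixI; first exact: good_idf. by allab; rewrite !mkE //= /sg1 /=; lra. Qed.
Lemma X02_fix2 : Ad k22 X02 = X02.
Proof. apply: Ad_fixI; first exact: good_f2. by allab; rewrite !mkE //= /sone /=; lra. Qed.

Lemma case2 : ~ admits_K_invariant_acs R Th2.
Proof.
move=> [J HJ].
have HX0 := X02_m.
have hY := HJ.1 _ HX0.
set Y := J X02 in hY *.
have F1 := Ad_fixE good_idf (J_fix HJ HX0 k21_K X02_fix1).
have F2 := Ad_fixE good_f2 (J_fix HJ HX0 k22_K X02_fix2).
case: hY => hYk hYo.
have O := hYo _ Z2_kT.
rewrite trE /index_iota !subn0 /= !big_cons !big_nil !mkE //= in O.
have nfY := nfE hYk.
have Yc : Y = parA Y 1 3 *: X02.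
  move: O (F1 0 1 isT isT) (F1 0 2 isT isT) (F1 0 3 isT isT) (F1 1 2 isT isT)
    (F1 1 3 isT isT) (F1 2 3 isT isT) (F1 0 5 isT isT) (F1 0 6 isT isT) (F1 0 7 isT isT)
    (F1 1 6 isT isT) (F1 1 7 isT isT) (F1 2 7 isT isT) (F2 0 2 isT isT) (F2 1 3 isT isT).
  rewrite !nfY // /kn /skw /sg1 /idf /sone /= => *.
  apply/matrixP => a b; rewrite mxE !eE; case: a b => [a ha] [b hb] /=.
  case8 a ha; case8 b hb; rewrite nfY // mkE // /kn /skw /=; lra.
apply: (final (a := 1%N) (b := 3%N) HJ HX0 _ Yc); first by move=> X hX; exact: (J_scale _ HJ hX).
by rewrite /X02 mkE.
Qed.
End Case2.

Definition Th3 := [:: a2; a3; a4].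
Definition L3 : seq (nat * nat) := [:: (1,0); (2,0); (3,0); (4,1); (4,2); (4,3); (4,5); (4,6); (4,7); (5,0); (6,0); (7,0)]%N.

Lemma inpE3 (R : realType) (X : 'M[R]_(4+4)) : in_p Th3 X <-> in_g X /\ Pz L3 X.
Proof.
split.
  move=> [hg [h1 h2]]; split => //; have hg' := proj1 (in_gE X) hg.
  have : e X 1 0 = 0 by rewrite -(h1E X i1 i0); apply: h1 => //; nspan.
  have : e X 2 0 = 0 by rewrite -(h1E X i2 i0); apply: h1 => //; nspan.
  have : e X 3 0 = 0 by rewrite -(h1E X i3 i0); apply: h1 => //; nspan.
  have : e X 4 1 = 0 by rewrite -(h2E X i0 i1); apply: h2 => //; nspan.
  have : e X 4 2 = 0 by rewrite -(h2E X i0 i2); apply: h2 => //; nspan.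
  have : e X 4 3 = 0 by rewrite -(h2E X i0 i3); apply: h2 => //; nspan.
  have := hg' 0 5 isT isT; have := hg' 0 6 isT isT; have := hg' 0 7 isT isT; have := hg' 1 0 isT isT; have := hg' 2 0 isT isT; have := hg' 3 0 isT isT; simpl => *.
  rewrite /L3 !PzE /=; do 12 (split; first lra); exact: Pz0.
move=> [hg hz]; split => //; split.
  move=> i j; case: (ord4P i) => ->; case: (ord4P j) => -> // _ ns.
  - by rewrite h1E; exact: (hz (_, _)).
  - by rewrite h1E; exact: (hz (_, _)).
  - by exfalso; apply: ns; yspan (-1)%Z (0)%Z (0)%Z.
  - by rewrite h1E; exact: (hz (_, _)).
  - by exfalso; apply: ns; yspan (-1)%Z (-1)%Z (0)%Z.
  - by exfalso; apply: ns; yspan (0)%Z (-1)%Z (0)%Z.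
move=> i j; case: (ord4P i) => ->; case: (ord4P j) => -> // _ ns.
  - by rewrite h2E; exact: (hz (_, _)).
  - by rewrite h2E; exact: (hz (_, _)).
  - by rewrite h2E; exact: (hz (_, _)).
  - by exfalso; apply: ns; yspan (-1)%Z (-1)%Z (-1)%Z.
  - by exfalso; apply: ns; yspan (-1)%Z (0)%Z (-1)%Z.
  - by exfalso; apply: ns; yspan (0)%Z (0)%Z (-1)%Z.
Qed.

Definition f3 (n : nat) : nat := match n with 0 => 0 | 1 => 1 | 2 => 6 | 3 => 7 | 4 => 4 | 5 => 5 | 6 => 2 | 7 => 3 | n => n end%N.
Lemma good_f3 : good f3. Proof. by all1. Qed.

Section Case3.
Variable R : realType.
Definition t3_3 (a b : nat) (v : R) := (a, b, v).
Definition X03 : 'M[R]_(4+4) := mk [:: t3_3 0 2 (1); t3_3 2 0 (-1); t3_3 4 6 (1); t3_3 6 4 (-1); t3_3 0 6 (1); t3_3 2 4 (-1); t3_3 4 2 (1); t3_3 6 0 (-1)].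
Definition Z3 : 'M[R]_(4+4) := mk [:: t3_3 1 3 (1); t3_3 3 1 (-1); t3_3 5 7 (1); t3_3 7 5 (-1)].
Definition k31 : 'M[R]_(4+4) := spm idf (@sg1 R).
Definition k32 : 'M[R]_(4+4) := spm f3 (@sone R).

Lemma k31_K : in_KTheta Th3 k31.
Proof.
apply: spm_KTheta; first exact: inpE3; first exact: good_idf.
- by all1; rewrite /sg1 /=; lra.
- by all1; rewrite /sg1 /idf /=; lra.
- by all1.
- by all1.
- by [].
- rewrite detPlus; first by rewrite /Ekc !(spmE _ good_idf) //= ?eqxx /sg1 /=; lra.
  move=> a b h1 h2 h3; case: a h1 h2 => [|[|[|[|?]]]] // h1 h2; case: b h3 => [|[|?]] // h3;
  rewrite /Ekc !(spmE _ good_idf) //=; lra.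
- rewrite detMinus; first by rewrite /Ekc !(spmE _ good_idf) //= ?eqxx /sg1 /=; lra.
  move=> a b h1 h2 h3; case: a h1 h2 => [|[|[|[|?]]]] // h1 h2; case: b h3 => [|[|?]] // h3;
  rewrite /Ekc !(spmE _ good_idf) //=; lra.
Qed.

Lemma k32_K : in_KTheta Th3 k32.
Proof.
apply: spm_KTheta; first exact: inpE3; first exact: good_f3.
- by all1; rewrite /sone /=; lra.
- by all1; rewrite /sone /=; lra.
- by all1.
- by all1.
- by [].
- rewrite detPlus; first by rewrite /Ekc !(spmE _ good_f3) //= ?eqxx /sone /=; lra.
  move=> a b h1 h2 h3; case: a h1 h2 => [|[|[|[|?]]]] // h1 h2; case: b h3 => [|[|?]] // h3;
  rewrite /Ekc !(spmE _ good_f3) //=; lra.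
- rewrite detMinus; first by rewrite /Ekc !(spmE _ good_f3) //= ?eqxx /sone /=; lra.
  move=> a b h1 h2 h3; case: a h1 h2 => [|[|[|[|?]]]] // h1 h2; case: b h3 => [|[|?]] // h3;
  rewrite /Ekc !(spmE _ good_f3) //=; lra.
Qed.

Lemma Z3_kT : in_kTheta Th3 Z3.
Proof.
have hk : in_k Z3 by apply: in_kI; allab; rewrite !mkE //=; lra.
split => //; apply/inpE3; split; first by case: hk.
by rewrite /L3 !PzE /= !mkE //=; do 12 (split => //); exact: Pz0.
Qed.

Lemma X03_k : in_k X03.
Proof. by apply: in_kI; allab; rewrite !mkE //=; lra. Qed.

Lemma X03_m : in_m Th3 X03.
Proof.
split; first exact: X03_k.
move=> Z [hZk /inpE3 [_ hz]]; rewrite trE; expand_sum; rewrite !mkE //=.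
move: hz; rewrite /L3 !PzE /= !(nfE hZk) // /kn /skw /=.
move=> [? [? [? [? [? [? [? [? [? [? [? [? _]]]]]]]]]]]]; lra.
Qed.

Lemma X03_fix1 : Ad k31 X03 = X03.
Proof. apply: Ad_fixI; first exact: good_idf. by allab; rewrite !mkE //= /sg1 /=; lra. Qed.
Lemma X03_fix2 : Ad k32 X03 = X03.
Proof. apply: Ad_fixI; first exact: good_f3. by allab; rewrite !mkE //= /sone /=; lra. Qed.

Lemma case3 : ~ admits_K_invariant_acs R Th3.
Proof.
move=> [J HJ].
have HX0 := X03_m.
have hY := HJ.1 _ HX0.
set Y := J X03 in hY *.
have F1 := Ad_fixE good_idf (J_fix HJ HX0 k31_K X03_fix1).
have F2 := Ad_fixE good_f3 (J_fix HJ HX0 k32_K X03_fix2).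
case: hY => hYk hYo.
have O := hYo _ Z3_kT.
rewrite trE /index_iota !subn0 /= !big_cons !big_nil !mkE //= in O.
have nfY := nfE hYk.
have Yc : Y = parA Y 0 2 *: X03.
  move: O (F1 0 1 isT isT) (F1 0 2 isT isT) (F1 0 3 isT isT) (F1 1 2 isT isT)
    (F1 1 3 isT isT) (F1 2 3 isT isT) (F1 0 5 isT isT) (F1 0 6 isT isT) (F1 0 7 isT isT)
    (F1 1 6 isT isT) (F1 1 7 isT isT) (F1 2 7 isT isT) (F2 0 2 isT isT) (F2 1 3 isT isT).
  rewrite !nfY // /kn /skw /sg1 /idf /sone /= => *.
  apply/matrixP => a b; rewrite mxE !eE; case: a b => [a ha] [b hb] /=.
  case8 a ha; case8 b hb; rewrite nfY // mkE // /kn /skw /=; lra.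
apply: (final (a := 0%N) (b := 2%N) HJ HX0 _ Yc); first by move=> X hX; exact: (J_scale _ HJ hX).
by rewrite /X03 mkE.
Qed.
End Case3.

Theorem proposition12 (R : realType) (Theta : seq 'rV[int]_4) :
  Theta = [:: a1; a2; a3] \/ Theta = [:: a1; a2; a4] \/ Theta = [:: a2; a3; a4] ->
  ~ admits_K_invariant_acs R Theta.
Proof.
case=> [->|[->|->]]; [exact: case1 | exact: case2 | exact: case3].
Qed.
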